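(* Let $\pi\colon G_1\to G_2$ be an epimorphism of pro-$p$ groups which induces an isomorphism $G_1^{[2]}\to G_2^{[2]}$, where $G_2^{[2]}\cong(\mathbb{Z}/q)^I$ for some set $I$, and suppose that $H^2(G_2)=H^2(G_2)_{\mathrm{dec}}$. Then $\pi$ is an isomorphism if and only if the induced map $(G_1)_{[3]}\to(G_2)_{[3]}$ is an isomorphism.
   Context: $p$ prime, $q=p^s$; $H^i(G)=H^i(G,\mathbb{Z}/q)$ continuous with trivial action; $H^2(G)_{\mathrm{dec}}$ is the image of the cup product $H^1(G)\otimes H^1(G)\to H^2(G)$. $G^{(2)}=G^q[G,G]$, $G^{[2]}=G/G^{(2)}$; $\delta=1$ if $p>2$, $\delta=2$ if $p=2$; $G_{(3)}=G^{\delta q}[G^{(2)},G]$ and $G_{[3]}=G/G_{(3)}$. *)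

(* Defs.v *)
From HB Require Import structures.
From mathcomp Require Import all_boot all_order all_algebra.
From mathcomp Require Import all_classical all_reals all_analysis.

Set Implicit Arguments.
Unset Strict Implicit.
Unset Printing Implicit Defensive.

Import GRing.Theory.
Local Open Scope classical_set_scope.

#[short(type="topGroupCarrier")]
HB.structure Definition TopGroupCarrier :=
  {G of monoid.Group G & Topological G}.

Section Defs.
Variable G : topGroupCarrier.
Local Open Scope group_scope.

Definition topological_group : Prop :=
  continuous (fun xy : G * G => xy.1 * xy.2) /\ continuous (fun x : G => x^-1).

Definition is_subgroup (H : set G) : Prop :=
  H 1 /\ (forall x y, H x -> H y -> H (x * y^-1)).

Definition is_normal (H : set G) : Prop :=
  forall x g, H x -> H (g^-1 * x * g).

Definition gen_subgroup (S : set G) : set G :=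
  [set x | forall H, is_subgroup H -> S `<=` H -> H x].

Definition cl_gen (S : set G) : set G := closure (gen_subgroup S).

(* U has finite index p^k for some k: there are p^k left cosets r_i U
   partitioning G. *)
Definition p_power_index (p : nat) (U : set G) : Prop :=
  exists (k : nat) (r : 'I_(p ^ k)%N -> G),
    forall x : G, exists! i : 'I_(p ^ k)%N, U ((r i)^-1 * x).

(* profinite group (compact, Hausdorff, totally disconnected topological group)
   in which every open normal subgroup has p-power index, i.e. G is an inverse
   limit of finite p-groups. *)
Definition pro_p_group (p : nat) : Prop :=
  [/\ topological_group, compact [set: G], hausdorff_space G,
      totally_disconnected [set: G] &
      forall U : set G, open U -> is_subgroup U -> is_normal U ->
        p_power_index p U].

Definition frat2 (q : nat) : set G :=
  cl_gen ([set x | exists g : G, x = g ^+ q] `|`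
          [set x | exists g h : G, x = [~ g, h]]).

Definition delta (p : nat) : nat := if p == 2%N then 2%N else 1%N.

Definition frat3 (p q : nat) : set G :=
  cl_gen ([set x | exists g : G, x = g ^+ (delta p * q)] `|`
          [set x | exists g h : G, frat2 q g /\ x = [~ g, h]]).

(* continuity of a map into Z/q with the discrete topology *)
Definition cont_Zq (q : nat) (f : G -> 'Z_q) : Prop :=
  forall a : 'Z_q, open (f @^-1` [set a]).

Definition cont2_Zq (q : nat) (f : G * G -> 'Z_q) : Prop :=
  forall a : 'Z_q, open (f @^-1` [set a]).

Definition H1_elt (q : nat) (chi : G -> 'Z_q) : Prop :=
  cont_Zq chi /\ (forall g h, chi (g * h) = (chi g + chi h)%R).

(* continuous inhomogeneous 2-cocycles with trivial action *)
Definition cocycle2 (q : nat) (c : G -> G -> 'Z_q) : Prop :=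
  cont2_Zq (fun xy => c xy.1 xy.2) /\
  (forall g h k, (c h k - c (g * h)%g k + c g (h * k)%g - c g h)%R = 0%R).

(* H^2(G) = H^2(G)_dec: every continuous 2-cocycle is cohomologous to a
   finite sum of cup products chi_i \cup psi_i, (chi \cup psi)(g,h) =
   chi(g) psi(h), of elements of H^1(G); the coboundary of a continuous
   1-cochain b is (db)(g,h) = b(h) - b(gh) + b(g). *)
Definition H2_decomposable (q : nat) : Prop :=
  forall c : G -> G -> 'Z_q, cocycle2 c ->
    exists (n : nat) (chi psi : 'I_n -> G -> 'Z_q) (b : G -> 'Z_q),
      (forall i, H1_elt (chi i)) /\ (forall i, H1_elt (psi i)) /\ cont_Zq b /\
      forall g h, c g h =
        (\sum_(i < n) chi i g * psi i h + (b h - b (g * h)%g + b g))%R.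

End Defs.

Section Maps.
Local Open Scope group_scope.
Variables G1 G2 : topGroupCarrier.

Definition group_hom (f : G1 -> G2) : Prop :=
  forall x y, f (x * y) = f x * f y.

Definition epimorphism (f : G1 -> G2) : Prop :=
  [/\ group_hom f, continuous f & forall y, exists x, f x = y].

Definition isomorphism (f : G1 -> G2) : Prop :=
  group_hom f /\ continuous f /\
  exists g : G2 -> G1, [/\ continuous g, cancel f g & cancel g f].

(* the map G1/N1 -> G2/N2, x N1 |-> f(x) N2, is well defined and bijective *)
Definition induces_iso (f : G1 -> G2) (N1 : set G1) (N2 : set G2) : Prop :=
  [/\ (forall x x', N1 (x^-1 * x') -> N2 ((f x)^-1 * f x')),
      (forall x x', N2 ((f x)^-1 * f x') -> N1 (x^-1 * x')) &
      (forall y, exists x, N2 ((f x)^-1 * y))].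
End Maps.

(* G^[2] = G/G^(2) is isomorphic (as a profinite group) to (Z/q)^I:
   there is a continuous surjective homomorphism G -> (Z/q)^I (product
   topology, Z/q discrete, i.e. every coordinate is continuous) with kernel
   exactly G^(2). *)
Definition quot2_free (G : topGroupCarrier) (q : nat) : Prop :=
  exists (I : Type) (phi : G -> I -> 'Z_q),
    [/\ (forall i, cont_Zq (fun g => phi g i)),
        (forall g h, phi (g * h)%g = (fun i => phi g i + phi h i)%R),
        (forall y : I -> 'Z_q, exists g, phi g = y) &
        (forall g, phi g = (fun _ => 0%R) <-> frat2 q g)].

(* Main.v *)
Require Import Defs.
From HB Require Import structures.
From mathcomp Require Import all_boot all_order all_algebra all_fingroup all_solvable.
From mathcomp Require Import all_classical all_reals all_analysis.
From mathcomp Require Import ring.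

Set Implicit Arguments.
Unset Strict Implicit.
Unset Printing Implicit Defensive.

Section FileA.
Local Open Scope classical_set_scope.
Local Open Scope group_scope.

Lemma tg_cvgM (G : topGroupCarrier) (T : Type) (F : set_system T) (FF : Filter F)
  (f g : T -> G) (a b : G) :
  topological_group G -> f x @[x --> F] --> a -> g x @[x --> F] --> b ->
  (f x * g x) @[x --> F] --> a * b.
Proof.
move=> [cM _] fa gb.
by apply: (@continuous2_cvg _ _ _ _ _ FF f g (fun u v => u * v) a b) => //; exact: (cM (a, b)).
Qed.

Lemma tg_cvgV (G : topGroupCarrier) (T : Type) (F : set_system T) (FF : Filter F)
  (f : T -> G) (a : G) :
  topological_group G -> f x @[x --> F] --> a -> (f x)^-1 @[x --> F] --> a^-1.
Proof.
move=> [_ cV] fa.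
by apply: cvg_comp; [exact: fa | exact: cV].
Qed.

Lemma tg_contL (G : topGroupCarrier) (c : G) :
  topological_group G -> continuous (fun y : G => c * y).
Proof. move=> tg y; apply: tg_cvgM => //; exact: cvg_cst. Qed.

Lemma tg_contR (G : topGroupCarrier) (c : G) :
  topological_group G -> continuous (fun y : G => y * c).
Proof. move=> tg y; apply: tg_cvgM => //; exact: cvg_cst. Qed.

Lemma openP (T : topologicalType) (A : set T) : (forall x, A x -> nbhs x A) -> open A.
Proof. by move=> h; rewrite openE => x /h. Qed.

Lemma open_nbhsP (T : topologicalType) (A : set T) x : open A -> A x -> nbhs x A.
Proof. by move=> oA Ax; apply: open_nbhs_nbhs; split. Qed.

Definition lcos (G : topGroupCarrier) (x : G) (U : set G) : set G :=
  fun y => U (x^-1 * y).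

Lemma open_lcos (G : topGroupCarrier) (x : G) U :
  topological_group G -> open U -> open (lcos x U).
Proof.
move=> tg oU; exact ((continuousP (fun y : G => x^-1 * y)).1 (@tg_contL G x^-1 tg) U oU).
Qed.

Lemma contZq_open (G : topGroupCarrier) q (f : G -> 'Z_q) (A : set 'Z_q) :
  cont_Zq f -> open (f @^-1` A).
Proof.
move=> cf.
have -> : f @^-1` A = \bigcup_(a in A) (f @^-1` [set a]).
  by apply/seteqP; split=> [x Ax|x [a Aa /= ->]] //; exists (f x).
by apply: bigcup_open => a _; exact: cf.
Qed.

Lemma contZq_closed (G : topGroupCarrier) q (f : G -> 'Z_q) (A : set 'Z_q) :
  cont_Zq f -> closed (f @^-1` A).
Proof. by move=> cf; rewrite -openC preimage_setC; exact: contZq_open. Qed.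

Lemma contZq_comp (G H : topGroupCarrier) q (f : H -> 'Z_q) (g : G -> H) :
  continuous g -> cont_Zq f -> cont_Zq (f \o g).
Proof.
move=> cg cf a; rewrite comp_preimage.
exact: ((continuousP g).1 cg _ (cf a)).
Qed.

Lemma subgroup1 (G : topGroupCarrier) (H : set G) : is_subgroup H -> H 1.
Proof. by case. Qed.

Lemma subgroupV (G : topGroupCarrier) (H : set G) x : is_subgroup H -> H x -> H x^-1.
Proof. by move=> [H1 HM] Hx; have := HM _ _ H1 Hx; rewrite mul1g. Qed.

Lemma subgroupM (G : topGroupCarrier) (H : set G) x y :
  is_subgroup H -> H x -> H y -> H (x * y).
Proof.
move=> sH Hx Hy; have := (proj2 sH) _ _ Hx (subgroupV sH Hy); by rewrite invgK.
Qed.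

Lemma subgroupX (G : topGroupCarrier) (H : set G) x n :
  is_subgroup H -> H x -> H (x ^+ n).
Proof.
move=> sH Hx; elim: n => [|n IH]; first exact: subgroup1.
by rewrite expgS; apply: subgroupM.
Qed.

Lemma gen_subgroupP (G : topGroupCarrier) (S : set G) : is_subgroup (gen_subgroup S).
Proof.
split; first by move=> H [].
by move=> x y gx gy H sH SH; apply: (proj2 sH); [exact: gx | exact: gy].
Qed.

Lemma gen_sub (G : topGroupCarrier) (S : set G) : S `<=` gen_subgroup S.
Proof. by move=> x Sx H _ /(_ x Sx). Qed.

Lemma gen_min (G : topGroupCarrier) (S K : set G) :
  is_subgroup K -> S `<=` K -> gen_subgroup S `<=` K.
Proof. by move=> sK SK x /(_ K sK SK). Qed.

Lemma cl_gen_sub (G : topGroupCarrier) (S : set G) : S `<=` cl_gen S.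
Proof. by move=> x /gen_sub; exact: subset_closure. Qed.

Lemma cl_gen1 (G : topGroupCarrier) (S : set G) : cl_gen S 1.
Proof. by apply: subset_closure; exact: subgroup1 (gen_subgroupP S). Qed.

Lemma cl_gen_min (G : topGroupCarrier) (S K : set G) :
  closed K -> is_subgroup K -> S `<=` K -> cl_gen S `<=` K.
Proof.
move=> cK sK SK; rewrite (closure_id K).1 //; apply: closureS; exact: gen_min.
Qed.

Lemma ghom1 (G H : topGroupCarrier) (f : G -> H) : group_hom f -> f 1 = 1.
Proof.
move=> hf; have := hf 1 1; rewrite mulg1 => e.
by apply: (mulgI (f 1)); rewrite mulg1 -e.
Qed.

Lemma ghomV (G H : topGroupCarrier) (f : G -> H) x : group_hom f -> f x^-1 = (f x)^-1.
Proof.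
move=> hf; apply: (mulgI (f x)); rewrite -hf !mulgV; exact: ghom1.
Qed.

Lemma ghomX (G H : topGroupCarrier) (f : G -> H) x n : group_hom f -> f (x ^+ n) = (f x) ^+ n.
Proof.
move=> hf; elim: n => [|n IH]; first exact: ghom1.
by rewrite !expgS hf IH.
Qed.

Lemma ghomR (G H : topGroupCarrier) (f : G -> H) x y : group_hom f -> f [~ x, y] = [~ f x, f y].
Proof. by move=> hf; rewrite /commg /conjg !hf !ghomV. Qed.

End FileA.

Section FileB.
Import GRing.Theory.
Local Open Scope classical_set_scope.
Local Open Scope ring_scope.

Lemma H1_1 (G : topGroupCarrier) q (chi : G -> 'Z_q) : H1_elt chi -> chi 1%g = 0.
Proof.
move=> [_ h]; have := h 1%g 1%g; rewrite mulg1 => e.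
by apply: (@addrI _ (chi 1%g)); rewrite addr0 -e.
Qed.

Lemma H1_V (G : topGroupCarrier) q (chi : G -> 'Z_q) x : H1_elt chi -> chi (x^-1)%g = - chi x.
Proof.
move=> hc; have := (proj2 hc) x x^-1%g; rewrite mulgV H1_1 // => e.
by apply: (@addrI _ (chi x)); rewrite -e subrr.
Qed.

Lemma H1_X (G : topGroupCarrier) q (chi : G -> 'Z_q) x n : H1_elt chi -> chi (x ^+ n)%g = chi x *+ n.
Proof.
move=> hc; elim: n => [|n IH]; first by rewrite expg0 H1_1.
by rewrite expgS (proj2 hc) IH mulrS.
Qed.

Lemma H1_R (G : topGroupCarrier) q (chi : G -> 'Z_q) x y : H1_elt chi -> chi [~ x, y]%g = 0.
Proof.
move=> hc; rewrite /commg /conjg !(proj2 hc) !H1_V //; ring.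
Qed.

Lemma Zq_natmul0 q (a : 'Z_q) m : (1 < q)%N -> (q %| m)%N -> a *+ m = 0.
Proof.
move=> q1 /dvdnP [k ->]; rewrite -mulr_natr natrM pchar_Zp // mulr0 mulr0 //.
Qed.

Lemma H1_frat2 (G : topGroupCarrier) q (chi : G -> 'Z_q) x :
  (1 < q)%N -> H1_elt chi -> frat2 q x -> chi x = 0.
Proof.
move=> q1 hc; apply: (@cl_gen_min _ _ (chi @^-1` [set 0])).
- exact: contZq_closed (proj1 hc).
- split; first exact: H1_1.
  by move=> a b /= ea eb; rewrite (proj2 hc) H1_V // ea eb subrr.
- move=> a [[g ->]|[g [h ->]]] /=; last exact: H1_R.
  by rewrite H1_X // Zq_natmul0.
Qed.

Lemma dvd_bin2_delta p s : prime p -> (0 < s)%N -> (p ^ s %| 'C(delta p * p ^ s, 2))%N.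
Proof.
move=> pp s0; rewrite /delta; case: eqP => [->|p2].
  by rewrite bin2 -mulnA mul2n doubleK; exact: dvdn_mulr.
rewrite mul1n bin2odd; first exact: dvdn_mulr.
rewrite oddX; apply/orP; right.
have := even_prime pp; case=> // ->.
Qed.

Section Core.
Variables (G : topGroupCarrier) (q n : nat) (chi psi : 'I_n -> G -> 'Z_q) (T : G -> 'Z_q).
Hypothesis q1 : (1 < q)%N.
Hypothesis hchi : forall i, H1_elt (chi i).
Hypothesis hpsi : forall i, H1_elt (psi i).
Hypothesis TM : forall x y, T (x * y)%g = T x + T y - \sum_(i < n) chi i x * psi i y.

Local Notation E x y := (\sum_(i < n) chi i x * psi i y).

Lemma T1 : T 1%g = 0.
Proof.
have := TM 1%g 1%g; rewrite mulg1 /= => e.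
have E0 : \sum_(i < n) chi i 1%g * psi i 1%g = 0.
  by apply: big1 => i _; rewrite H1_1 // mul0r.
by move: e; rewrite E0 subr0 => e; apply: (@addrI _ (T 1%g)); rewrite addr0 -e.
Qed.

Lemma TV x : T (x^-1)%g + T x = - E x x.
Proof.
have := TM x^-1%g x; rewrite mulVg T1 => e.
have -> : E x x = - \sum_(i < n) chi i x^-1%g * psi i x.
  rewrite -sumrN; apply: eq_bigr => i _; rewrite H1_V //; ring.
by apply/eqP; rewrite opprK -subr_eq0 -e.
Qed.

Lemma EL0 x y : (forall i, chi i x = 0) -> E x y = 0.
Proof. by move=> h; apply: big1 => i _; rewrite h mul0r. Qed.

Lemma TX x m : T (x ^+ m)%g = T x *+ m - E x x *+ 'C(m, 2).
Proof.
elim: m => [|m IH]; first by rewrite expg0 T1 mulr0n mulr0n subr0.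
rewrite expgS TM IH.
have -> : \sum_(i < n) chi i x * psi i (x ^+ m)%g = E x x *+ m.
  rewrite -sumrMnl; apply: eq_bigr => i _; rewrite H1_X // mulrnAr //.
rewrite binS bin1 mulrS mulrnDr; ring.
Qed.


Lemma T_frat2R x h : frat2 q x -> T [~ x, h]%g = 0.
Proof.
move=> fx.
have cx : forall i, chi i x = 0 by move=> i; exact: H1_frat2.
have cxV : forall i, chi i x^-1%g = 0 by move=> i; rewrite H1_V // cx oppr0.
rewrite /commg /conjg TM TM TM (EL0 _ cxV) (EL0 _ cx).
have -> : \sum_(i < n) chi i h^-1%g * psi i (x * h)%g = - E h h.
  rewrite -sumrN; apply: eq_bigr => i _.
  rewrite (proj2 (hpsi i)) H1_V // (H1_frat2 q1 (hpsi i) fx); ring.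
have := TV x; rewrite (EL0 _ cx) => e1.
have := TV h => e2.
rewrite subr0 subr0.
apply/eqP; rewrite -subr_eq0; apply/eqP.
have -> : T x^-1%g + (T h^-1%g + (T x + T h) - - E h h) - 0 =
  (T x^-1%g + T x) + (T h^-1%g + T h) + E h h by ring.
by rewrite e1 e2; ring.
Qed.

Lemma T_frat3 p s : q = (p ^ s)%N -> prime p -> (0 < s)%N -> cont_Zq T ->
  forall x, frat3 p q x -> T x = 0.
Proof.
move=> qE pp s0 cT.
pose K := (T @^-1` [set 0]) `&` \bigcap_(i in [set: 'I_n])
   ((chi i @^-1` [set 0]) `&` (psi i @^-1` [set 0])).
have KP : forall x, K x <-> [/\ T x = 0, forall i, chi i x = 0 & forall i, psi i x = 0].
  move=> x; split.
    by move=> [Tx Ix]; split => // i; have [] := Ix i I.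
  by move=> [Tx cx px]; split => // i _; split; [exact: cx | exact: px].
move=> x fx; suff : K x by case/KP.
apply: (@cl_gen_min _ _ K) fx.
- apply: closedI; first exact: contZq_closed.
  apply: closed_bigI => i _; apply: closedI; apply: contZq_closed.
    exact: (proj1 (hchi i)).
  exact: (proj1 (hpsi i)).
- split; first by apply/KP; split; [exact: T1 | move=> i; exact: H1_1 ..].
  move=> a b /KP [Ta ca pa] /KP [Tb cb pb]; apply/KP; split.
  + have cbV : forall i, chi i b^-1%g = 0 by move=> i; rewrite H1_V // cb oppr0.
    rewrite TM (EL0 _ ca) Ta.
    have := TV b; rewrite (EL0 _ cb) Tb addr0 => ->; rewrite oppr0; ring.
  + by move=> i; rewrite (proj2 (hchi i)) H1_V // ca cb; ring.
  + by move=> i; rewrite (proj2 (hpsi i)) H1_V // pa pb; ring.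
- move=> a [[g ->]|[g [h [fg ->]]]]; apply/KP; split.
  + rewrite TX Zq_natmul0 // ?Zq_natmul0 ?subr0 //; rewrite qE.
      exact: dvd_bin2_delta.
    by rewrite dvdn_mull.
  + by move=> i; rewrite H1_X // Zq_natmul0 // dvdn_mull.
  + by move=> i; rewrite H1_X // Zq_natmul0 // dvdn_mull.
  + exact: T_frat2R.
  + by move=> i; exact: H1_R.
  + by move=> i; exact: H1_R.
Qed.

End Core.

End FileB.

Section FileC.
Import GRing.Theory.
Local Open Scope classical_set_scope.
Local Open Scope ring_scope.

Lemma closed_image (X Y : topologicalType) (f : X -> Y) (A : set X) :
  continuous f -> compact [set: X] -> hausdorff_space Y -> closed A -> closed (f @` A).
Proof.
move=> cf cX hY cA; apply: compact_closed => //.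
apply: continuous_compact; first exact: continuous_subspaceT.
exact: (subclosed_compact cA cX).
Qed.

Lemma contZq_sub (G : topGroupCarrier) q (f g : G -> 'Z_q) :
  cont_Zq f -> cont_Zq g -> cont_Zq (fun x => f x - g x).
Proof.
move=> cf cg a; apply: openP => x /= e.
have : nbhs x ((f @^-1` [set f x]) `&` (g @^-1` [set g x])).
  by apply: filterI; apply: open_nbhsP => //.
by apply: filterS => y [/= -> ->].
Qed.

Section PiOpen.
Variables (G1 G2 : topGroupCarrier) (pi : G1 -> G2).
Hypotheses (tg1 : topological_group G1) (cG1 : compact [set: G1])
  (hG2 : hausdorff_space G2) (hom : group_hom pi) (cpi : continuous pi)
  (surj : forall y, exists x, pi x = y).

Lemma pi_open (U : set G1) : open U -> open (pi @` U).
Proof.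
move=> oU.
pose UN := fun x => exists u, U u /\ pi u = pi x.
have oUN : open UN.
  apply: openP => x [u [Uu e]].
  pose n := (u^-1 * x)%g.
  have : open (fun y => U (y * n^-1)%g).
    exact ((continuousP (fun y : G1 => (y * n^-1)%g)).1 (@tg_contR G1 n^-1%g tg1) U oU).
  move=> o; have : nbhs x (fun y => U (y * n^-1)%g).
    apply: open_nbhsP => //.
    by rewrite /n invMg invgK mulgA mulgV mul1g.
  apply: filterS => y Uy; exists (y * n^-1)%g; split => //.
  have pn : pi n = 1%g by rewrite /n hom (ghomV _ hom) e mulVg.
  by rewrite hom (ghomV _ hom) pn invg1 mulg1.
have -> : pi @` U = ~` (pi @` (~` UN)).
  apply/seteqP; split.
    move=> _ [u Uu <-] [x nUN e]; apply: nUN; exists u; split => //.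
  move=> y ny; have [x ex] := surj y.
  have : UN x by apply: contrapT => nUx; apply: ny; exists x.
  by move=> [u [Uu e]]; exists u => //; rewrite e.
rewrite openC; apply: closed_image => //; exact: open_closedC.
Qed.

Lemma inj_iso : injective pi -> isomorphism pi.
Proof.
move=> ipi; split=> //; split=> //.
have sb : forall y, exists x, pi x == y by move=> y; have [x <-] := surj y; exists x.
pose g y := xchoose (sb y).
have gK : cancel g pi by move=> y; exact/eqP/(xchooseP (sb y)).
have fK : cancel pi g by move=> x; apply: ipi; rewrite gK.
exists g; split => //.
apply/continuousP => A oA.
have -> : g @^-1` A = pi @` A.
  apply/seteqP; split => [y /= Ay|_ [x Ax <-]]; last by rewrite /= fK.
  by exists (g y) => //; rewrite gK.
exact: pi_open.
Qed.
End PiOpen.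

Section Cocyc.
Variables (G1 G2 : topGroupCarrier) (q : nat) (pi : G1 -> G2) (W : set G1) (T : G1 -> 'Z_q).
Hypotheses (tg1 : topological_group G1) (cG1 : compact [set: G1])
  (hG2 : hausdorff_space G2) (hom : group_hom pi) (cpi : continuous pi)
  (surj : forall y, exists x, pi x = y).
Hypotheses (oW : open W) (sW : is_subgroup W) (nW : is_normal W).
Hypothesis TW : forall x w, W w -> T (x * w)%g = T x.
Hypothesis TNr : forall x n, pi n = 1%g -> T (x * n)%g = T x + T n.
Hypothesis TNl : forall x n, pi n = 1%g -> T (n * x)%g = T n + T x.

Definition Fc x y := T x + T y - T (x * y)%g.

Lemma TNconj y n : pi n = 1%g -> T (y^-1 * n * y)%g = T n.
Proof.
move=> pn.
have pn' : pi (y^-1 * n * y)%g = 1%g.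
  by rewrite !hom pn mulg1 -hom mulVg ghom1.
have e1 := TNl y pn.
have : T (n * y)%g = T (y * (y^-1 * n * y))%g by rewrite !mulgA mulgV mul1g.
rewrite e1 TNr // addrC => /addrI; by [].
Qed.

Lemma Fc_wd x x' y y' : pi x = pi x' -> pi y = pi y' -> Fc x y = Fc x' y'.
Proof.
move=> ex ey.
have [n pn ->] : exists2 n, pi n = 1%g & x' = (x * n)%g.
  by exists (x^-1 * x')%g; [rewrite hom (ghomV _ hom) ex mulVg | rewrite mulKVg].
have [m pm ->] : exists2 m, pi m = 1%g & y' = (y * m)%g.
  by exists (y^-1 * y')%g; [rewrite hom (ghomV _ hom) ey mulVg | rewrite mulKVg].
have pn' : pi (y^-1 * n * y)%g = 1%g by rewrite !hom pn mulg1 -hom mulVg ghom1.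
rewrite /Fc.
have -> : (x * n * (y * m))%g = (x * y * (y^-1 * n * y) * m)%g.
  by rewrite !mulgA mulgK.
rewrite (TNr x pn) (TNr y pm) (TNr _ pm) (TNr _ pn') (TNconj _ pn); ring.
Qed.

Lemma Fc_W x y w w' : W w -> W w' -> Fc (x * w)%g (y * w')%g = Fc x y.
Proof.
move=> Ww Ww'.
rewrite /Fc.
have -> : (x * w * (y * w'))%g = (x * y * ((y^-1 * w * y) * w'))%g.
  by rewrite !mulgA mulgK.
have Wc : W (y^-1 * w * y * w')%g by apply: subgroupM => //; exact: nW.
by rewrite (TW x Ww) (TW y Ww') (TW _ Wc).
Qed.

Lemma contT : cont_Zq T.
Proof.
move=> a; apply: openP => x /= Tx.
have : nbhs x (lcos x W).
  apply: open_nbhsP; first exact: open_lcos.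
  by rewrite /lcos mulVg; exact: subgroup1.
apply: filterS => y; rewrite /lcos /= => Wy.
by rewrite -Tx -(TW x Wy) mulgA mulgV mul1g.
Qed.

Let sb g : exists x, pi x == g.
Proof. by have [x <-] := surj g; exists x. Qed.
Definition sec g := xchoose (sb g).
Lemma secK g : pi (sec g) = g.
Proof. exact/eqP/(xchooseP (sb g)). Qed.

Definition coc (g h : G2) := Fc (sec g) (sec h).

Lemma coc_pi x y : coc (pi x) (pi y) = Fc x y.
Proof. by apply: Fc_wd; rewrite secK. Qed.

Lemma coc_cocycle : cocycle2 coc.
Proof.
split; last first.
  move=> g h k.
  rewrite -[g]secK -[h]secK -[k]secK -!hom !coc_pi /Fc !mulgA; ring.
move=> a; apply: openP => -[g h] /= e.
pose A := pi @` lcos (sec g) W; pose B := pi @` lcos (sec h) W.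
have oA : open A by apply: pi_open => //; exact: open_lcos.
have oB : open B by apply: pi_open => //; exact: open_lcos.
have Ag : A g.
  by exists (sec g); rewrite ?secK // /lcos mulVg; exact: subgroup1.
have Bh : B h.
  by exists (sec h); rewrite ?secK // /lcos mulVg; exact: subgroup1.
exists (A, B); first by split; apply: open_nbhsP.
move=> [g' h'] [/= [x Wx <-] [y Wy <-]].
rewrite /= coc_pi -e /coc.
have -> : x = (sec g * ((sec g)^-1 * x))%g by rewrite mulKVg.
have -> : y = (sec h * ((sec h)^-1 * y))%g by rewrite mulKVg.
exact: Fc_W.
Qed.

End Cocyc.

End FileC.

Section FileD.
Import GRing.Theory.
Local Open Scope classical_set_scope.
Local Open Scope ring_scope.

Lemma T_vanish (G1 G2 : topGroupCarrier) (p s : nat) (pi : G1 -> G2) (W : set G1)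
  (T : G1 -> 'Z_(p ^ s)) :
  prime p -> (0 < s)%N ->
  topological_group G1 -> compact [set: G1] -> hausdorff_space G2 ->
  group_hom pi -> continuous pi -> (forall y, exists x, pi x = y) ->
  open W -> is_subgroup W -> is_normal W ->
  (forall x w, W w -> T (x * w)%g = T x) ->
  (forall x n, pi n = 1%g -> T (x * n)%g = T x + T n) ->
  (forall x n, pi n = 1%g -> T (n * x)%g = T n + T x) ->
  H2_decomposable G2 (p ^ s) ->
  (forall n, pi n = 1%g -> frat3 p (p ^ s) n) ->
  forall n, pi n = 1%g -> T n = 0.
Proof.
move=> pp s0 tg1 cG1 hG2 hom cpi surj oW sW nW TW TNr TNl H2 N3.
have q1 : (1 < p ^ s)%N.
  by rewrite -(expn0 p) ltn_exp2l ?prime_gt1.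
have [k [chi [psi [b [hchi [hpsi [cb bE]]]]]]] :=
  H2 _ (coc_cocycle tg1 cG1 hG2 hom cpi surj oW sW nW TW TNr TNl).
have T1 : T 1%g = 0.
  have := TNr 1%g 1%g (ghom1 hom); rewrite mulg1 => e.
  by apply: (@addrI _ (T 1%g)); rewrite addr0 -e.
have b1 : b 1%g = 0.
  have := bE 1%g 1%g; rewrite -{1 2}(ghom1 hom) coc_pi // /Fc mulg1 T1.
  rewrite big1 => [|i _]; last by rewrite H1_1 // mul0r.
  rewrite mulg1 add0r => e; move: e; by rewrite subrr add0r subrr add0r => ->.
pose T' x := T x - b (pi x).
pose chi1 i := chi i \o pi; pose psi1 i := psi i \o pi.
have hchi1 : forall i, H1_elt (chi1 i).
  move=> i; split; first exact: contZq_comp (proj1 (hchi i)).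
  by move=> x y; rewrite /chi1 /= hom (proj2 (hchi i)).
have hpsi1 : forall i, H1_elt (psi1 i).
  move=> i; split; first exact: contZq_comp (proj1 (hpsi i)).
  by move=> x y; rewrite /psi1 /= hom (proj2 (hpsi i)).
have TM : forall x y, T' (x * y)%g = T' x + T' y - \sum_(i < k) chi1 i x * psi1 i y.
  move=> x y; have := bE (pi x) (pi y); rewrite coc_pi // /Fc -hom => e.
  rewrite /T' /chi1 /psi1 /=.
  have -> : \sum_(i < k) chi i (pi x) * psi i (pi y) =
    T x + T y - T (x * y)%g - (b (pi y) - b (pi (x * y)%g) + b (pi x)).
    by rewrite e; ring.
  ring.
have cT' : cont_Zq T'.
  apply: contZq_sub; first exact: contT tg1 oW sW TW.
  exact: contZq_comp cb.
move=> n pn; have := T_frat3 q1 hchi1 hpsi1 TM erefl pp s0 cT' (N3 n pn).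
by rewrite /T' pn b1 subr0.
Qed.

End FileD.

Section FileE.
Local Open Scope classical_set_scope.

Section ZeroDim.
Variable T : topologicalType.
Hypotheses (cT : compact [set: T]) (hT : hausdorff_space T).

Lemma closed_sep (A B : set T) : closed A -> closed B -> A `&` B = set0 ->
  exists U V, [/\ open U, open V, A `<=` U, B `<=` V & U `&` V = set0].
Proof.
move=> cA cB AB.
have nT := compact_normal hT cT.
have : set_nbhs A (~` B).
  apply/set_nbhsP; exists (~` B); split => //; first exact: closed_openC.
  by move=> x Ax Bx; have : (A `&` B) x by []; rewrite AB.
move=> /(nT A cA) [V /set_nbhsP [C [oC AC CV]] clV].
exists C, (~` closure V); split => //.
- exact: closed_openC (@closed_closure _ V).
- by move=> x Bx clx; have := clV x clx.
- apply/seteqP; split => // x [Cx nclx]; apply: nclx.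
  by apply: subset_closure; exact: CV.
Qed.

Variable x : T.
Let Qx := fun z => forall C, clopen C -> C x -> C z.

Let closedQ : closed Qx.
Proof.
have -> : Qx = \bigcap_(C in [set C | clopen C /\ C x]) C.
  by apply/seteqP; split => [z Qz C [cC Cx]|z h C cC Cx]; [exact: Qz|exact: h].
by apply: closed_bigI => C [[]].
Qed.

Let keyK (U : set T) : open U -> Qx `<=` U -> exists C, [/\ clopen C, C x & C `<=` U].
Proof.
move=> oU QU; apply: contrapT => hn.
have hn' : forall C, clopen C -> C x -> (C `&` ~` U) !=set0.
  move=> C cC Cx; apply/set0P/eqP => e; apply: hn; exists C; split => //.
  by move=> z Cz; apply: contrapT => nUz; have : (C `&` ~` U) z by []; rewrite e.
pose F := filter_from [set C | clopen C /\ C x] (fun C => C `&` ~` U).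
have FF : Filter F.
  apply: filter_from_filter.
    by exists setT; split => //; split; [exact: openT | exact: closedT].
  move=> C1 C2 [cC1 C1x] [cC2 C2x]; exists (C1 `&` C2).
    by split; [exact: clopenI | split].
  by move=> z [[? ?] ?]; split; split.
have PF : ProperFilter F.
  by apply: filter_from_proper => // C [cC Cx]; exact: hn'.
have FU : F (~` U) by exists setT; [split => //; split; [exact: openT|exact: closedT] | move=> z []].
have cU : compact (~` U).
  exact: subclosed_compact (open_closedC oU) cT (@subsetT _ _).
have [z [nUz clz]] := cU F PF FU.
apply: nUz; apply: QU => C cC Cx; apply: contrapT => nCz.
have : nbhs z (~` C) by apply: open_nbhsP => //; exact: closed_openC (proj2 cC).
move=> nb; have : F (C `&` ~` U) by exists C.
move=> /(clz _ _) /(_ nb) [w [[Cw _] nCw]].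
exact: nCw.
Qed.


Let connQ : connected Qx.
Proof.
move=> B [b Bb] [Op oO BE] [Cl cCl BE'].
have BQ : B `<=` Qx by rewrite BE => z [].
apply: contrapT => BnQ.
have [y [Qy nBy]] : exists y, Qx y /\ ~ B y.
  apply: contrapT => h; apply: BnQ; apply/seteqP; split => // z Qz.
  by apply: contrapT => nBz; apply: h; exists z.
pose B' := Qx `&` ~` Op.
have cB : closed B by rewrite BE'; apply: closedI.
have cB' : closed B' by apply: closedI => //; exact: open_closedC.
have dBB : B `&` B' = set0.
  by apply/seteqP; split => // z [+ [_ nOpz]]; rewrite BE => -[_ Opz].
have [UB [UB' [oUB oUB' BUB B'UB' dU]]] := closed_sep cB cB' dBB.
have QU : Qx `<=` UB `|` UB'.
  move=> z Qz; have [Opz|nOpz] := pselect (Op z).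
    by left; apply: BUB; rewrite BE.
  by right; apply: B'UB'; split.
have [C [cC Cx CU]] := keyK (openU oUB oUB') QU.
have Qxx : Qx x by move=> D _.
have dis : forall z, UB z -> UB' z -> False.
  by move=> z h1 h2; have : (UB `&` UB') z by []; rewrite dU.
have [Opx|nOpx] := pselect (Op x).
- have cE : clopen (C `&` UB).
    split; first exact: openI (proj1 cC) oUB.
    have -> : C `&` UB = C `&` ~` UB'.
      apply/seteqP; split => z [Cz h]; split => //.
        by move=> h'; exact: dis h h'.
      by case: (CU z Cz).
    by apply: closedI (proj2 cC) _; exact: open_closedC.
  have yB' : B' y by split => // Opy; apply: nBy; rewrite BE.
  have := Qy _ cE; case; first by split => //; apply: BUB; rewrite BE.
  move=> _ h; exact: dis h (B'UB' _ yB').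
- have cE : clopen (C `&` UB').
    split; first exact: openI (proj1 cC) oUB'.
    have -> : C `&` UB' = C `&` ~` UB.
      apply/seteqP; split => z [Cz h]; split => //.
        by move=> h'; exact: dis h' h.
      by case: (CU z Cz).
    by apply: closedI (proj2 cC) _; exact: open_closedC.
  have := BQ _ Bb _ cE; case; first by split => //; apply: B'UB'; split.
  move=> _ h; exact: dis (BUB _ Bb) h.
Qed.

Lemma clopen_sep : totally_disconnected [set: T] -> forall y, x <> y ->
  exists C, [/\ clopen C, C x & ~ C y].
Proof.
move=> td y xy; apply: contrapT => h; apply: xy.
have Qy : Qx y.
  by move=> C cC Cx; apply: contrapT => nCy; apply: h; exists C; split.
have Qxx : Qx x by move=> C _.
have := @connected_component_max _ [set: T] Qx x Qxx (@subsetT _ _) connQ y Qy.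
by rewrite td.
Qed.

End ZeroDim.


Section OpenNormal.
Local Open Scope group_scope.
Variable G : topGroupCarrier.
Hypotheses (tg : topological_group G).

Lemma tube (K : set G) (f : G -> G -> G) (O : set G) :
  compact K -> (forall k, K k -> {for (k, 1), continuous (fun p : G * G => f p.1 p.2)}) ->
  open O -> (forall k, K k -> O (f k 1)) ->
  exists V, nbhs 1 V /\ forall k v, K k -> V v -> O (f k v).
Proof.
move=> cK cf oO Of.
have nV : nbhs 1 (fun v => K `<=` (fun k => O (f k v))).
  apply: ((compact_near_coveringP K).1 cK G (nbhs 1) (fun v k => O (f k v))) => k Kk.
  have := cf k Kk; move=> /(_ O) h.
  have : nbhs (f k 1) O by exact: open_nbhsP (Of k Kk).
  by move=> /h.
exists (fun v => K `<=` (fun k => O (f k v))); split => // k v Kk Vv; exact: Vv.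
Qed.

Lemma cvg_p1 (a b : G) : (fun p : G * G => p.1) @ (a, b) --> a.
Proof. exact: cvg_fst. Qed.
Lemma cvg_p2 (a b : G) : (fun p : G * G => p.2) @ (a, b) --> b.
Proof. exact: cvg_snd. Qed.

Lemma open_sub1 (H : set G) : is_subgroup H -> nbhs 1 H -> open H.
Proof.
move=> sH nH; apply: openP => h Hh.
have : nbhs h (fun y => H (h^-1 * y)).
  have c := @tg_contL G h^-1 tg h; have := c H; rewrite /= mulVg; apply; exact: nH.
apply: filterS => y Hy.
have := subgroupM sH Hh Hy; by rewrite mulKVg.
Qed.

Lemma open_normal_in (C : set G) : compact [set: G] -> clopen C -> C 1 ->
  exists W, [/\ open W, is_subgroup W, is_normal W & W `<=` C].
Proof.
move=> cG [oC clC] C1.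
have cC : compact C := subclosed_compact clC cG (@subsetT _ _).
have [V1 [nV1 hV1]] := @tube C (fun c g => c * g) C cC
  (fun k _ => tg_cvgM _ tg (@cvg_p1 k 1) (@cvg_p2 k 1)) oC
  (fun k Ck => ltac:(by rewrite /= mulg1)).
have [V2 [nV2 hV2]] := @tube C (fun c g => c * g^-1) C cC
  (fun k _ => tg_cvgM _ tg (@cvg_p1 k 1) (tg_cvgV _ tg (@cvg_p2 k 1))) oC
  (fun k Ck => ltac:(by rewrite /= invg1 mulg1)).
pose H' := fun g => forall c, C c -> C (c * g) /\ C (c * g^-1).
have sH' : is_subgroup H'.
  split.
    by move=> c Cc; rewrite invg1 mulg1.
  move=> g h Hg Hh c Cc; rewrite invMg invgK; split.
    by rewrite mulgA; apply: (Hh _ (proj1 (Hg _ Cc))).2.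
  by rewrite mulgA; apply: (Hg _ (proj1 (Hh _ Cc))).2.
have nH' : nbhs 1 H'.
  apply: filterS (filterI nV1 nV2) => g [g1 g2] c Cc; split.
    exact: hV1.
  exact: hV2.
have oH' : open H' := open_sub1 sH' nH'.
have H'C : H' `<=` C by move=> g /(_ 1 C1) [+ _]; rewrite mul1g.
have [V3 [nV3 hV3]] := @tube [set: G] (fun y g => y^-1 * g * y) H' cG
  (fun k _ => tg_cvgM _ tg (tg_cvgM _ tg (tg_cvgV _ tg (@cvg_p1 k 1)) (@cvg_p2 k 1))
     (@cvg_p1 k 1)) oH'
  (fun k _ => ltac:(by rewrite /= mulg1 mulVg; exact: subgroup1)).
pose W := fun g => forall y, H' (y^-1 * g * y).
have sW : is_subgroup W.
  split.
    by move=> y; rewrite mulg1 mulVg; exact: subgroup1.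
  move=> g h Wg Wh y.
  have -> : y^-1 * (g * h^-1) * y = (y^-1 * g * y) * (y^-1 * h * y)^-1.
    by rewrite !invMg !invgK !mulgA mulgK.
  exact: (proj2 sH').
exists W; split => //.
- apply: open_sub1 => //; apply: filterS nV3 => g V3g y; exact: hV3.
- move=> g z Wg y.
  have -> : y^-1 * (z^-1 * g * z) * y = (z * y)^-1 * g * (z * y).
    by rewrite invMg !mulgA.
  exact: Wg.
- by move=> g /(_ 1); rewrite invg1 mul1g mulg1 => /H'C.
Qed.

Lemma sep_open_normal : compact [set: G] -> hausdorff_space G ->
  totally_disconnected [set: G] -> forall n : G, n <> 1 ->
  exists W, [/\ open W, is_subgroup W, is_normal W & ~ W n].
Proof.
move=> cG hG td n n1.
have [C [cC C1 nCn]] := clopen_sep cG hG td (nesym n1).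
have [W [oW sW nW WC]] := open_normal_in cG cC C1.
by exists W; split => // /WC.
Qed.
End OpenNormal.

End FileE.

Section FileF.
Local Open Scope classical_set_scope.
Local Open Scope group_scope.

Lemma cl_gen_map (G H : topGroupCarrier) (f : G -> H) (S : set G) (T : set H) :
  continuous f -> group_hom f -> (forall x, S x -> T (f x)) ->
  forall x, cl_gen S x -> cl_gen T (f x).
Proof.
move=> cf hf ST.
have cP : closed (f @^-1` cl_gen T).
  exact: closed_comp (fun x _ => cf x) (@closed_closure _ _).
have sub : gen_subgroup S `<=` f @^-1` cl_gen T.
  have : gen_subgroup S `<=` f @^-1` gen_subgroup T.
    apply: gen_min; last by move=> x /ST /gen_sub.
    split; first by rewrite /= ghom1 //; exact: subgroup1 (gen_subgroupP T).
    move=> x y /= Tx Ty; rewrite hf ghomV //.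
    exact: (proj2 (gen_subgroupP T)).
  by move=> h x /h Tx; apply: subset_closure.
move=> x; rewrite /cl_gen => /(closureS sub); by rewrite -(closure_id _).1.
Qed.

Lemma frat2_map (G H : topGroupCarrier) (f : G -> H) q :
  continuous f -> group_hom f -> forall x, frat2 q x -> frat2 q (f x).
Proof.
move=> cf hf; apply: cl_gen_map => // x [[g ->]|[g [h ->]]].
  by left; exists (f g); rewrite ghomX.
by right; exists (f g), (f h); rewrite ghomR.
Qed.

Lemma frat3_map (G H : topGroupCarrier) (f : G -> H) p q :
  continuous f -> group_hom f -> forall x, frat3 p q x -> frat3 p q (f x).
Proof.
move=> cf hf; apply: cl_gen_map => // x [[g ->]|[g [h [g2 ->]]]].
  by left; exists (f g); rewrite ghomX.
right; exists (f g), (f h); rewrite ghomR //; split => //.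
exact: frat2_map.
Qed.

Lemma iso_induces (G H : topGroupCarrier) (f : G -> H) p q :
  isomorphism f -> induces_iso f (frat3 p q) (frat3 p q).
Proof.
move=> [hf [cf [g [cg fK gK]]]].
have hg : group_hom g.
  by move=> x y; apply: (can_inj fK); rewrite hf !gK.
split.
- move=> x x' N; rewrite -ghomV // -hf; exact: frat3_map.
- move=> x x' N; have := frat3_map cg hg N.
  by rewrite hg ghomV // !fK.
- move=> y; exists (g y); rewrite gK mulVg; exact: cl_gen1.
Qed.

End FileF.

Section FileP.
Local Open Scope classical_set_scope.
Local Open Scope group_scope.

Section Rep.
Variables (G : topGroupCarrier) (W : set G) (m : nat) (r : 'I_m -> G).
Hypotheses (sW : is_subgroup W) (nW : is_normal W).
Hypothesis rW : forall x, exists! i, W ((r i)^-1 * x).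

Let ex x : exists i : 'I_m, `[< W ((r i)^-1 * x) >].
Proof. by have [i [Wi _]] := rW x; exists i; apply/asboolP. Qed.

Definition idx x : 'I_m := xchoose (ex x).
Lemma idxP x : W ((r (idx x))^-1 * x).
Proof. exact/asboolP/(xchooseP (ex x)). Qed.
Lemma idx_uniq x i : W ((r i)^-1 * x) -> idx x = i.
Proof.
move=> Wi; have [j [_ uj]] := rW x.
by rewrite -(uj _ (idxP x)) (uj _ Wi).
Qed.

Lemma WV x : W x -> W x^-1. Proof. exact: subgroupV. Qed.
Lemma WM x y : W x -> W y -> W (x * y). Proof. exact: subgroupM. Qed.
Lemma Wconj x g : W x -> W (g^-1 * x * g). Proof. exact: nW. Qed.

Lemma idx_eq a b : idx a = idx b <-> W (a^-1 * b).
Proof.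
split=> [e|Wab].
  have h1 := idxP a; have h2 := idxP b; rewrite e in h1.
  have := WM (WV h1) h2; by rewrite invMg invgK !mulgA mulgK.
symmetry; apply: idx_uniq.
have := WM (idxP a) Wab; by rewrite !mulgA mulgK.
Qed.

Lemma idx_r i : idx (r i) = i.
Proof. by apply: idx_uniq; rewrite mulVg; exact: subgroup1. Qed.

Definition rhof x (i : 'I_m) : 'I_m := idx (r i * x).

Lemma rhof_inj x : injective (rhof x).
Proof.
move=> i j /idx_eq e.
rewrite -(idx_r i) -(idx_r j); apply/idx_eq.
have := Wconj x^-1 e; by rewrite invgK invMg !mulgA mulgV mul1g mulgK.
Qed.

Definition rho x : {perm 'I_m} := perm (@rhof_inj x).

Lemma rhoM x y : rho (x * y) = rho x * rho y.
Proof.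
apply/permP => i; rewrite permM !permE /rhof; apply/idx_eq.
have e : idx (r (idx (r i * x))) = idx (r i * x) by rewrite idx_r.
have := Wconj y (proj1 (idx_eq _ _) (esym e)).
by rewrite !invMg !mulgA.
Qed.

Lemma rho1 : rho 1 = 1.
Proof.
by apply/permP => i; rewrite permE perm1 /rhof mulg1 idx_r.
Qed.

Lemma rho_eq x y : rho x = rho y <-> W (x^-1 * y).
Proof.
split => [e|Wxy].
  have := congr1 (fun s : {perm 'I_m} => s (idx 1)) e; rewrite !permE /rhof => /idx_eq.
  by rewrite invMg !mulgA mulgVK.
apply/permP => i; rewrite !permE /rhof; apply/idx_eq.
by rewrite invMg !mulgA mulgVK.
Qed.


Definition Qs : {set {perm 'I_m}} := [set rho (r i) | i : 'I_m].

Lemma rho_in x : rho x \in Qs.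
Proof.
apply/imsetP; exists (idx x) => //; apply/rho_eq.
have := WV (idxP x); by rewrite invMg invgK.
Qed.

Lemma Qs_group : group_set Qs.
Proof.
apply/group_setP; split; first by rewrite -rho1 rho_in.
move=> _ _ /imsetP [i _ ->] /imsetP [j _ ->]; by rewrite -rhoM rho_in.
Qed.

Canonical Qg := Group Qs_group.

Lemma card_Qs : #|Qs| = m.
Proof.
rewrite card_imset ?cardT ?size_enum_ord //.
move=> i j /rho_eq Wij; by rewrite -(idx_uniq Wij) idx_r.
Qed.

End Rep.

Section Beta.
Import GRing.Theory.
Variables (gT : finGroupType) (Q Nb : {group gT}) (p s : nat).
Hypotheses (pp : prime p) (s0 : (0 < s)%N) (pQ : p.-group Q) (nNQ : normal Nb Q) (Nb1 : (Nb :!=: 1)%g).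

Lemma beta_exists : exists beta : gT -> 'Z_(p ^ s),
 [/\ {in Nb &, forall x y, beta (x * y) = (beta x + beta y)%R},
     {in Nb & Q, forall x t, beta (x ^ t) = beta x} &
     exists2 z, z \in Nb & beta z != 0%R].
Proof.
have q1 : (1 < p ^ s)%N by rewrite -(expn0 p) ltn_exp2l ?prime_gt1.
have sNQ := normal_sub nNQ.
have nilQ := pgroup_nil pQ.
have QN : Q \subset Q :&: 'N(Nb) by rewrite finset.subsetI subxx normal_norm.
have pr : [~: Nb, Q] \proper Nb := nil_comm_properl nilQ sNQ Nb1 QN.
have [K maxK sCK] := @maxgroup_exists _ (fun K : {group gT} => K \proper Nb) [~: Nb, Q]%G pr.
have pNb := pgroupS sNQ pQ.
have iK : #|Nb : K| = p := p_maximal_index pNb maxK.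
have nKN : normal K Nb := p_maximal_normal pNb maxK.
have [sKN [z zNb zK]] := properP (maxgroupp maxK).
have nK : Nb \subset 'N(K) := normal_norm nKN.
pose cz := coset K z.
have cardQ : #|Nb / K| = p by rewrite card_quotient.
have ocz : #[cz] = p.
  apply: prime_nt_dvdP => //; last by rewrite -cardQ order_dvdG // mem_quotient.
  rewrite order_eq1; apply/negP => /eqP c1; apply/negP: zK.
  by rewrite negbK; exact: coset_idr (fintype.subsetP nK z zNb) c1.
have gen : <[cz]> = Nb / K.
  apply/eqP; rewrite eqEcard cycle_subG mem_quotient //= cardQ -ocz //.
have inC : forall x, x \in Nb -> coset K x \in <[cz]>.
  by move=> x xN; rewrite gen mem_quotient.
pose dl x := odflt 0%N (omap val [pick i : 'I_p | coset K x == cz ^+ i]).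
have dlP : forall x, x \in Nb -> coset K x = cz ^+ dl x.
  move=> x xN; rewrite /dl; case: pickP => [i /eqP -> //| h].
  have [i ilt e] := cyclePmin (inC x xN); rewrite ocz in ilt.
  by have := h (Ordinal ilt); rewrite /= e eqxx.
pose u := (p ^ s.-1)%N.
have pu : (p * u = p ^ s)%N by rewrite /u -expnS prednK.
pose beta x : 'Z_(p ^ s) := ((dl x * u)%N)%:R%R.
have bE : forall x a, x \in Nb -> coset K x = cz ^+ a -> beta x = ((a * u)%N)%:R%R.
  move=> x a xN e; have := dlP x xN; rewrite e => /eqP.
  rewrite eq_expg_mod_order ocz => /eqP em.
  rewrite /beta -(Zp_nat_mod q1) -[in RHS](Zp_nat_mod q1) -pu -!muln_modl em //.
exists beta; split.
- move=> x y xN yN.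
  rewrite (bE (x * y) (dl x + dl y)%N) ?groupM //.
    by rewrite mulnDl natrD.
  rewrite coset_morphM ?(fintype.subsetP nK) // (dlP x xN) (dlP y yN) expgD //.
- move=> x t xN tQ.
  have cK : [~ x, t] \in K by apply: (fintype.subsetP sCK); exact: mem_commg.
  have cN : [~ x, t] \in Nb by exact: (fintype.subsetP sKN).
  have xtN : x * [~ x, t] \in Nb by rewrite groupM.
  rewrite conjg_mulR (bE (x * [~ x, t]) (dl x) xtN) //.
  by rewrite coset_kerr // (dlP x xN).
- exists z => //; rewrite (bE z 1%N) // ?expg1 // mul1n.
  apply/eqP => /(congr1 val); rewrite /= val_Zp_nat // modn_small.
    by apply/eqP; rewrite -lt0n expn_gt0 prime_gt0.
  by rewrite -pu -{1}(mul1n u) ltn_mul2r expn_gt0 prime_gt0 // prime_gt1.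
Qed.

End Beta.

Section Tcons.
Import GRing.Theory.
Variables (G : topGroupCarrier) (W N : set G) (m : nat) (r : 'I_m -> G) (p s k : nat).
Hypotheses (sW : is_subgroup W) (nW : is_normal W).
Hypothesis rW : forall x, exists! i, W ((r i)^-1 * x).
Hypotheses (sN : is_subgroup N) (nN : is_normal N).
Hypotheses (pp : prime p) (s0 : (0 < s)%N) (mE : m = (p ^ k)%N).
Variable n0 : G.
Hypotheses (Nn0 : N n0) (nWn0 : ~ W n0).

Local Notation rho := (rho sW nW rW).

Lemma rhoV x : rho x^-1 = (rho x)^-1.
Proof.
apply: (mulgI (rho x)); rewrite -rhoM mulgV mulgV; exact: rho1.
Qed.

Definition Nbs : {set {perm 'I_m}} := [set t | `[< exists n, N n /\ rho n = t >]].

Lemma inNbs n : N n -> rho n \in Nbs.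
Proof. by move=> Nn; rewrite inE; apply/asboolP; exists n. Qed.

Lemma NbsP t : t \in Nbs -> exists2 n, N n & rho n = t.
Proof. by rewrite inE => /asboolP [n [Nn <-]]; exists n. Qed.

Lemma Nbs_group : group_set Nbs.
Proof.
apply/group_setP; split; first by rewrite -(rho1 sW nW rW) inNbs //; exact: subgroup1.
move=> _ _ /NbsP [a Na <-] /NbsP [b Nb <-]; rewrite -rhoM inNbs //.
exact: subgroupM.
Qed.

Canonical Nbg := Group Nbs_group.

Lemma T_exists : exists T : G -> 'Z_(p ^ s),
  [/\ forall x w, W w -> T (x * w) = T x,
      forall x n, N n -> T (x * n) = (T x + T n)%R,
      forall x n, N n -> T (n * x) = (T n + T x)%R &
      exists2 n1, N n1 & T n1 != 0%R].
Proof.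
have pQ : p.-group (Qg sW nW rW).
  by rewrite /pgroup /= card_Qs mE pnatX pnat_id ?orTb.
have nNQ : normal Nbg (Qg sW nW rW).
  apply/andP; split.
    by apply/fintype.subsetP => _ /NbsP [n _ <-]; exact: rho_in.
  apply/fintype.subsetP => _ /imsetP [i _ ->]; rewrite inE.
  apply/fintype.subsetP => _ /imsetP [_ /NbsP [n Nn <-] ->].
  rewrite conjgE -rhoV -!rhoM inNbs // mulgA; exact: nN.
have Nb1 : (Nbg :!=: 1)%g.
  apply/trivgPn; exists (rho n0); first exact: inNbs.
  apply/eqP => e; apply: nWn0.
  have : rho n0 = rho 1 by rewrite e rho1.
  move/rho_eq; rewrite mulg1 => /subgroupV; rewrite invgK; exact.
have [beta [bM bJ [z zN bz]]] := beta_exists pp s0 pQ nNQ Nb1.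
pose T x := beta ((repr (rho x *: Nbs))^-1 * rho x).
have RN : forall x, (repr (rho x *: Nbs))^-1 * rho x \in Nbs.
  move=> x; have := @mem_repr _ _ (rho x) (lcoset_refl Nbg (rho x)).
  by rewrite mem_lcoset -groupV invMg invgK.
have Tn : forall n, N n -> T n = beta (rho n).
  move=> n Nn; rewrite /T lcoset_id ?inNbs // (repr_group Nbg) invg1 mul1g //.
have TNr : forall x n, N n -> T (x * n) = (T x + T n)%R.
  move=> x n Nn; rewrite (Tn n Nn) /T rhoM lcosetM (lcoset_id (inNbs Nn)).
  by rewrite mulgA bM ?inNbs.
exists T; split => //.
- move=> x w Ww; rewrite /T.
  have -> : rho (x * w) = rho x by apply/esym/rho_eq; rewrite mulKg.
  by [].
- move=> x n Nn.
  have Nc : N (x^-1 * n * x) by exact: nN.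
  have -> : n * x = x * (x^-1 * n * x) by rewrite !mulgA mulgV mul1g.
  rewrite (TNr _ _ Nc) (Tn _ Nc) (Tn _ Nn) addrC; congr (_ + _)%R.
  rewrite !rhoM rhoV.
  rewrite -mulgA -conjgE; apply: bJ; [exact: inNbs | exact: rho_in].
- have [n1 Nn1 e] := NbsP zN; exists n1 => //; by rewrite Tn // e.
Qed.

End Tcons.

End FileP.


Local Open Scope classical_set_scope.

Theorem corollary6p2 (p s : nat) (G1 G2 : topGroupCarrier) (pi : G1 -> G2) :
  prime p -> (0 < s)%N ->
  @pro_p_group G1 p -> @pro_p_group G2 p ->
  epimorphism pi ->
  induces_iso pi (@frat2 G1 (p ^ s)) (@frat2 G2 (p ^ s)) ->
  @quot2_free G2 (p ^ s) ->
  @H2_decomposable G2 (p ^ s) ->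
  (isomorphism pi <->
   induces_iso pi (@frat3 G1 p (p ^ s)) (@frat3 G2 p (p ^ s))).
Proof.
move=> pp s0 [tg1 cG1 hG1 td1 pidx1] [tg2 cG2 hG2 td2 pidx2] [hom cpi surj] _ _ H2.
split; first exact: iso_induces.
move=> [_ i3 _].
have N3 : forall n, pi n = 1%g -> frat3 p (p ^ s) n.
  move=> n pn; have := i3 1%g n; rewrite invg1 mul1g; apply.
  by rewrite ghom1 // invg1 mul1g pn; exact: cl_gen1.
apply: inj_iso => //.
move=> x y exy; apply: contrapT => nxy.
pose n0 := (x^-1 * y)%g.
have pn0 : pi n0 = 1%g by rewrite /n0 hom (ghomV _ hom) exy mulVg.
have n01 : n0 <> 1%g.
  by move=> e; apply: nxy; rewrite -(mulVKg x y) -/n0 e mulg1.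
have [W [oW sW nW Wn0]] := sep_open_normal tg1 cG1 hG1 td1 n01.
have [k [r rW]] := pidx1 W oW sW nW.
pose N := fun n => pi n = 1%g.
have sN : is_subgroup N.
  split; first exact: ghom1.
  by move=> a b; rewrite /N hom (ghomV _ hom) => -> ->; rewrite invg1 mulg1.
have nN : is_normal N.
  by move=> a g; rewrite /N !hom (ghomV _ hom) => ->; rewrite mulg1 mulVg.
have [T [TW TNr TNl [n1 Nn1 Tn1]]] := T_exists sW nW rW sN nN pp s0 erefl pn0 Wn0.
have := T_vanish pp s0 tg1 cG1 hG2 hom cpi surj oW sW nW TW TNr TNl H2 N3 Nn1.
by move/eqP; rewrite (negbTE Tn1).
Qed.
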